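(* Define $P,H\in I(\mathcal{S})$ by $P(\sigma,\pi)=\binom{\pi}{\sigma}$ and $H(\sigma,\pi)=\binom{\pi}{\sigma}\eta(\sigma,\pi)$. Then $P=e^H=\sum_{\ell\ge0}H^\ell/\ell!$ (each entry being a finite sum).
   Context: $\mathcal{S}_n$ is the set of permutations of $[n]$ (written as words $\pi(1)\cdots\pi(n)$), and $\mathcal{S}=\bigcup_{n\ge0}\mathcal{S}_n$ (including the empty permutation); $|\pi|$ is the length. Two integer sequences $a_1\cdots a_k$, $b_1\cdots b_k$ are order-isomorphic if $a_i<a_j\iff b_i<b_j$ for all $i,j$. For $\sigma\in\mathcal{S}_k$, $\pi\in\mathcal{S}_n$, $\binom{\pi}{\sigma}$ is the number of order-preserving injections $\varphi:[k]\to[n]$ such that $\pi(\varphi(1))\cdots\pi(\varphi(k))$ is order-isomorphic to $\sigma$. $\mathcal{S}$ is partially ordered by $\sigma\le\pi$ iff $\binom{\pi}{\sigma}>0$. $I(\mathcal{S})$ is the incidence algebra over $\mathbb{Q}$: functions on pairs $(x,y)$ with $x\le y$, convolution $(FG)(x,y)=\sum_{x\le z\le y}F(x,z)G(z,y)$, identity $\delta(x,y)=[x=y]$ (Iverson bracket). $\eta(x,y)=[y\text{ covers }x]$; here $\pi$ covers $\sigma$ iff $\sigma\le\pi$ and $|\pi|=|\sigma|+1$. *)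

(* Defs.v *)
From HB Require Import structures.
From mathcomp Require Import all_boot all_order all_algebra.
Set Implicit Arguments. Unset Strict Implicit. Unset Printing Implicit Defensive.
Import Order.TTheory GRing.Theory Num.Theory.

(* A permutation of [n] is a word pi(1)...pi(n), i.e. a seq nat that is a
   rearrangement of 1..n (n = size). The empty word is the empty permutation. *)
Definition is_perm (p : seq nat) : bool := perm_eq p (iota 1 (size p)).

Definition order_iso (a b : seq nat) : bool :=
  (size a == size b) &&
  [forall i : 'I_(size a), forall j : 'I_(size a),
      (nth 0 a i < nth 0 a j) == (nth 0 b i < nth 0 b j)].

(* binom(pi, sigma): number of order-preserving injections
   phi : [k] -> [n] with pi(phi(1))...pi(phi(k)) order-isomorphic to sigma *)
Definition pcount (sigma pi : seq nat) : nat :=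
  #|[set f : {ffun 'I_(size sigma) -> 'I_(size pi)} |
      [forall i : 'I_(size sigma), forall j : 'I_(size sigma),
          (i < j) ==> (f i < f j)] &&
      order_iso [seq nth 0 pi (f i) | i <- enum 'I_(size sigma)] sigma]|.

Definition ple (sigma pi : seq nat) : bool := 0 < pcount sigma pi.

(* incidence-algebra elements over Q, represented as functions on pairs
   (only values at pairs x <= y matter) *)
Definition incf := seq nat -> seq nat -> rat.

(* convolution: sum over permutations z with x <= z <= y; any such z has
   size <= size y, so we enumerate all permutations of size m <= size y *)
Definition conv (F G : incf) : incf := fun x y =>
  (\sum_(m < (size y).+1)
     \sum_(z <- permutations (iota 1 m) | ple x z && ple z y)
        F x z * G z y)%R.

Definition idelta : incf := fun x y => if x == y then 1%R else 0%R.

(* eta(x,y) = [y covers x] *)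
Definition eta (x y : seq nat) : bool := ple x y && (size y == (size x).+1).

Definition Pinc : incf := fun x y => ((pcount x y)%:R)%R.
Definition Hinc : incf := fun x y => if eta x y then ((pcount x y)%:R)%R else 0%R.

Fixpoint incpow (F : incf) (l : nat) : incf :=
  match l with
  | 0 => idelta
  | l'.+1 => conv (incpow F l') F
  end.

(* Main.v *)
Require Import Defs.
From HB Require Import structures.
From mathcomp Require Import all_boot all_order all_algebra.
From mathcomp Require Import zify.
Import Order.TTheory GRing.Theory Num.Theory.

Definition oi (a b : seq nat) := size a = size b /\
  forall i j, i < size a -> j < size a ->
    (nth 0 a i < nth 0 a j) = (nth 0 b i < nth 0 b j).

Lemma order_isoP a b : reflect (oi a b) (order_iso a b).
Proof.
apply: (iffP andP) => [[/eqP Hs /forallP H]|[Hs H]].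
  split=> // i j Hi Hj.
  by have /forallP/(_ (Ordinal Hj))/eqP := H (Ordinal Hi).
split; first by apply/eqP.
by apply/forallP => i; apply/forallP => j; apply/eqP; apply: H.
Qed.

Lemma oi_sym a b : oi a b -> oi b a.
Proof. by case=> Hs H; split=> // i j; rewrite -Hs => Hi Hj; rewrite H. Qed.

Lemma oi_trans a b c : oi a b -> oi b c -> oi a c.
Proof.
case=> Hs H [Hs' H']; split; first by rewrite Hs.
by move=> i j Hi Hj; rewrite H // H' // -Hs.
Qed.

Lemma oi_map a b s : oi a b -> all (fun i => i < size a) s ->
  oi (map (nth 0 a) s) (map (nth 0 b) s).
Proof.
case=> Hs H /allP Ha; split; first by rewrite !size_map.
move=> i j; rewrite size_map => Hi Hj.
by rewrite !(nth_map 0) // H // Ha // mem_nth.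
Qed.

Lemma mask_nthE (b : bitseq) (w : seq nat) :
  mask b w = map (nth 0 w) (mask b (iota 0 (size w))).
Proof. by rewrite map_mask -/(mkseq _ _) mkseq_nth. Qed.

Lemma oi_mask a b c : oi a b -> oi (mask c a) (mask c b).
Proof.
move=> H; have Hs := H.1.
rewrite (mask_nthE c a) (mask_nthE c b) -Hs; apply: oi_map => //.
apply/allP => x /mem_mask; by rewrite mem_iota.
Qed.

Definition std (u : seq nat) := [seq (count (fun a => a < x) u).+1 | x <- u].

Lemma count_lt_mono (u : seq nat) x y : x < y -> x \in u ->
  count (fun a => a < x) u < count (fun a => a < y) u.
Proof.
move=> Hxy; elim: u => [|a u IH] //=; rewrite inE => /orP [/eqP <-|Hx].
  rewrite ltnn Hxy add0n add1n ltnS; apply: sub_count => z /= Hz; lia.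
have := IH Hx; have : (a < x) <= (a < y) by case: (ltnP a x) => //= ?; lia.
lia.
Qed.

Lemma count_lt_le (u : seq nat) x y : x <= y ->
  count (fun a => a < x) u <= count (fun a => a < y) u.
Proof. by move=> Hxy; apply: sub_count => z /= Hz; lia. Qed.

Lemma count_lt_nth (u : seq nat) x :
  count (fun a => a < x) u = count (fun j => nth 0 u j < x) (iota 0 (size u)).
Proof. by rewrite -{1}(mkseq_nth 0 u) /mkseq count_map. Qed.

Lemma std_oi u : uniq u -> oi (std u) u.
Proof.
move=> Hu; split; first by rewrite size_map.
move=> i j; rewrite size_map => Hi Hj; rewrite !(nth_map 0) // ltnS.
case: (ltnP (nth 0 u i) (nth 0 u j)) => H.
  by apply: count_lt_mono => //; rewrite mem_nth.
by apply/negbTE; rewrite -ltnNge ltnS; apply: count_lt_le.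
Qed.

Lemma count_lt_iota x s n :
  count (fun a => a < x) (iota s n) = minn (x - s) n.
Proof.
elim: n s => [|n IH] s /=; first by rewrite minn0.
rewrite IH; case: (ltnP s x) => H.
  rewrite add1n; lia.
rewrite add0n; have -> : x - s = 0 by lia. have -> : x - s.+1 = 0 by lia.
by rewrite !min0n.
Qed.

Lemma std_perm u : uniq u -> perm_eq (std u) (iota 1 (size u)).
Proof.
move=> Hu.
have Hsub : {subset std u <= iota 1 (size u)}.
  move=> y /mapP [x Hx ->]; rewrite mem_iota /=.
  have : count (fun a => a < x) u != size u.
    by rewrite -all_count; apply/negP => /allP /(_ x Hx); rewrite ltnn.
  have := count_size (fun a => a < x) u.
  move=> H1 H2; by rewrite add1n ltnS ltn_neqAle H1 H2.
have Hus : uniq (std u).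
  rewrite map_inj_in_uniq // => x y Hx Hy [] Hc.
  case: (ltngtP x y) => // Hxy.
    by have := @count_lt_mono u _ _ Hxy Hx; rewrite Hc ltnn.
  by have := @count_lt_mono u _ _ Hxy Hy; rewrite Hc ltnn.
have Hle : size (iota 1 (size u)) <= size (std u) by rewrite size_iota size_map.
have [Hs Hi] := uniq_min_size Hus Hsub Hle.
by apply: uniq_perm => //; apply: iota_uniq.
Qed.

Lemma perm_std z u : is_perm z -> oi z u -> z = std u.
Proof.
rewrite /is_perm => Hz [Hs H].
apply: (@eq_from_nth _ 0); first by rewrite size_map.
move=> i Hi; rewrite (nth_map 0) -?Hs //.
have Hzi : nth 0 z i \in iota 1 (size z) by rewrite -(perm_mem Hz) mem_nth.
have E : count (fun a => a < nth 0 z i) z = (nth 0 z i).-1.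
  move/permP: Hz => ->; rewrite count_lt_iota.
  move: Hzi; rewrite mem_iota; lia.
have : nth 0 z i = (count (fun a => a < nth 0 z i) z).+1.
  by rewrite E; move: Hzi; rewrite mem_iota; lia.
move=> ->; congr S; rewrite !count_lt_nth Hs; apply: eq_in_count => j.
by rewrite mem_iota /= => Hj; rewrite H // Hs.
Qed.

Set Implicit Arguments. Unset Strict Implicit.

Fixpoint bm (n k : nat) : seq bitseq :=
  if n is n'.+1 then
    (if k is k'.+1 then map (cons true) (bm n' k') else [::]) ++ map (cons false) (bm n' k)
  else (if k is 0 then [:: [::]] else [::]).

Lemma mem_cons_map (x y : bool) b L :
  (x :: b \in map (cons y) L) = (x == y) && (b \in L).
Proof.
apply/mapP/andP => [[c Hc [-> ->]]|[/eqP -> Hb]]; first by [].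
by exists b.
Qed.

Lemma nil_notin_map (y : bool) L : ([::] \in map (cons y) L) = false.
Proof. by apply/mapP => [[c _]]. Qed.

Lemma mem_bm n k b : (b \in bm n k) = (size b == n) && (count id b == k).
Proof.
elim: n k b => [|n IH] k b /=.
  by case: k => [|k]; case: b => [|x b] //=; rewrite inE.
rewrite mem_cat; case: b => [|x b] /=.
  by case: k => [|k] //=; rewrite !nil_notin_map.
case: k => [|k]; rewrite ?in_nil ?mem_cons_map /= eqSS; case: x => /=;
  by rewrite ?IH ?orbF ?add1n ?add0n ?eqSS ?andbF.
Qed.

Lemma uniq_bm n k : uniq (bm n k).
Proof.
elim: n k => [|n IH] k /=; first by case: k.
rewrite cat_uniq.
have Hf : forall y : bool, injective (cons y) by move=> y ? ? [].
rewrite (map_inj_uniq (Hf false)) IH andbT.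
case: k => [|k] /=; first by apply/hasPn.
rewrite (map_inj_uniq (Hf true)) IH /=.
apply/hasPn => b /mapP [c _ ->]; by rewrite mem_cons_map.
Qed.

Lemma bm_nil n k : n < k -> bm n k = [::].
Proof.
move=> H; case E: (bm n k) => [|b L] //.
have : b \in bm n k by rewrite E mem_head.
rewrite mem_bm => /andP [/eqP Hs /eqP Hc]; have := count_size id b; lia.
Qed.

Lemma bm_full n : bm n n = [:: nseq n true].
Proof. by elim: n => [|n IH] //=; rewrite IH bm_nil. Qed.

Section Ffun.
Variables (k n : nat).
Implicit Types f g : {ffun 'I_k -> 'I_n}.

Definition incr f := [forall i : 'I_k, forall j : 'I_k, (i < j) ==> (f i < f j)].
Definition idx f := [seq nat_of_ord (f i) | i <- enum 'I_k].
Definition phi f : bitseq := [seq j \in idx f | j <- iota 0 n].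

Lemma idx_sorted f : incr f -> sorted ltn (idx f).
Proof.
move=> /forallP Hf; rewrite /idx sorted_map.
have : sorted ltn (map val (enum 'I_k)) by rewrite val_enum_ord iota_ltn_sorted.
rewrite sorted_map; apply: sub_sorted => i j /= Hij.
by have /forallP /(_ j) /implyP := Hf i; apply.
Qed.

Lemma mask_phi f : incr f -> mask (phi f) (iota 0 n) = idx f.
Proof.
move=> Hf; rewrite /phi -filter_mask.
apply: (irr_sorted_eq ltn_trans ltnn).
- by apply: sorted_filter; [exact: ltn_trans | exact: iota_ltn_sorted].
- exact: idx_sorted.
move=> x; rewrite mem_filter mem_iota /=.
case Hx: (x \in idx f) => //=; move/mapP: Hx => [i _ ->]; by rewrite ltn_ord.
Qed.

Lemma size_idx f : size (idx f) = k.
Proof. by rewrite size_map size_enum_ord. Qed.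

Lemma size_phi f : size (phi f) = n.
Proof. by rewrite size_map size_iota. Qed.

Lemma count_phi f : incr f -> count id (phi f) = k.
Proof.
move=> Hf; rewrite -(size_mask (s := iota 0 n)) ?size_phi ?size_iota //.
by rewrite mask_phi // size_idx.
Qed.

Lemma nth_idx f (i : 'I_k) : nth 0 (idx f) i = f i.
Proof.
rewrite /idx (nth_map i) ?size_enum_ord //; congr (nat_of_ord (f _)).
by apply: val_inj; rewrite /= nth_enum_ord.
Qed.

Lemma phi_inj f g : incr f -> incr g -> phi f = phi g -> f = g.
Proof.
move=> Hf Hg E; have E' : idx f = idx g by rewrite -mask_phi // E mask_phi.
apply/ffunP => i; apply: val_inj; by rewrite /= -!nth_idx E'.
Qed.

Lemma phi_surj b : size b = n -> count id b = k ->
  exists2 f, incr f & phi f = b.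
Proof.
move=> Hs Hc; set s := mask b (iota 0 n).
have Hss : size s = k by rewrite size_mask ?size_iota.
have Hlt : forall i : 'I_k, nth 0 s i < n.
  move=> i; have : nth 0 s i \in s by rewrite mem_nth // Hss.
  by move/mem_mask; rewrite mem_iota.
have Hsort : sorted ltn s by apply: sorted_mask; [exact: ltn_trans | exact: iota_ltn_sorted].
exists [ffun i => Ordinal (Hlt i)].
  apply/forallP => i; apply/forallP => j; apply/implyP => Hij; rewrite !ffunE /=.
  by apply: (sorted_ltn_nth ltn_trans 0 Hsort) => //; rewrite inE Hss.
rewrite /phi; have -> : idx [ffun i => Ordinal (Hlt i)] = s.
  rewrite /idx -[RHS](mkseq_nth 0) Hss /mkseq -val_enum_ord -map_comp.
  by apply: eq_map => i /=; rewrite ffunE.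
rewrite /s -Hs; elim: b {Hs Hc s Hss Hlt Hsort} 0 => [|x b IH] m //=.
case: x => /=.
  rewrite mem_head; congr cons; rewrite -[RHS](IH m.+1).
  apply/eq_in_map => j; rewrite mem_iota inE => H.
  by have -> : (j == m) = false by apply/eqP; lia.
have Hm : m \notin mask b (iota m.+1 (size b)).
  by apply/negP => /mem_mask; rewrite mem_iota; lia.
by rewrite (negPf Hm) IH.
Qed.

End Ffun.

Lemma pcount_mask s w :
  pcount s w = count (fun b => order_iso (mask b w) s) (bm (size w) (size s)).
Proof.
rewrite /pcount cardsE cardE size_filter -enumT.
set k := size s; set n := size w.
set E := enum {ffun 'I_k -> 'I_n}.
rewrite (eq_count (a2 := fun f : {ffun 'I_k -> 'I_n} =>
   order_iso [seq nth 0 w (f i) | i <- enum 'I_k] s && incr f)); last first.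
  by move=> f; rewrite /= andbC.
rewrite -count_filter.
rewrite (eq_in_count (a2 := fun f => order_iso (mask (phi f) w) s)); last first.
  move=> f; rewrite mem_filter => /andP [Hf _] /=.
  by rewrite mask_nthE -/n mask_phi // /idx -map_comp.
rewrite -(count_map (@phi k n) (fun b => order_iso (mask b w) s)).
apply/permP; apply: uniq_perm; [| exact: uniq_bm |].
  rewrite map_inj_in_uniq; first by apply: filter_uniq; rewrite /E enum_uniq.
  by move=> f g; rewrite !mem_filter => /andP [Hf _] /andP [Hg _]; apply: phi_inj.
move=> b; rewrite mem_bm; apply/mapP/andP => [[f]|[/eqP Hs /eqP Hc]].
  rewrite mem_filter => /andP [Hf _] ->.
  by rewrite size_phi count_phi.
have [f Hf Hb] := phi_surj Hs Hc.
exists f => //; by rewrite mem_filter Hf /E mem_enum.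
Qed.

Set Implicit Arguments. Unset Strict Implicit.

Lemma binom_step n k m B : (n < k -> B = 0) ->
  (k <= m) * 'C(n - k, m - k) * B + (k <= m.+1) * 'C(n - k, m.+1 - k) * B
  = (k <= m.+1) * 'C(n.+1 - k, m.+1 - k) * B.
Proof.
move=> HB; case: (ltnP n k) => Hnk; first by rewrite (HB Hnk) !muln0.
case: (ltngtP k m.+1) => Hkm.
- have Hkm' : k <= m by [].
  rewrite Hkm' (subSn Hnk) (subSn Hkm') binS.
  by rewrite !mul1n mulnDl addnC.
- have -> : (k <= m) = false by apply/negbTE; rewrite -ltnNge ltnW.
  by rewrite !mul0n.
- by rewrite -Hkm Hkm ltnn subnn !bin0 !mul0n.
Qed.

Lemma sum_bm_cons n k (G : bitseq -> nat) :
  \sum_(c <- bm n.+1 k) G c =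
  (if k is k'.+1 then \sum_(c <- bm n k') G (true :: c) else 0)
  + \sum_(c <- bm n k) G (false :: c).
Proof. by rewrite /= big_cat /= big_map; case: k => [|k]; rewrite ?big_nil ?big_map. Qed.

Lemma comp_id (w : seq nat) (F : seq nat -> nat) m k :
  \sum_(b <- bm (size w) m) \sum_(c <- bm m k) F (mask c (mask b w))
  = (k <= m) * 'C(size w - k, m - k) * \sum_(d <- bm (size w) k) F (mask d w).
Proof.
elim: w F m k => [|x w IH] F m k.
  case: m => [|m] /=.
    rewrite big_seq1; case: k => [|k] /=; first by rewrite !big_seq1 subnn bin0 !mul1n.
    by rewrite !big_nil muln0.
  rewrite big_nil; case: k => [|k] /=; first by rewrite subn0 bin0n muln0 mul0n.
  by rewrite big_nil muln0.
rewrite [size _]/= [in RHS]sum_bm_cons sum_bm_cons.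
have HB : size w < k -> \sum_(d <- bm (size w) k) F (mask d w) = 0.
  by move=> H; rewrite bm_nil // big_nil.
case: m => [|m].
  rewrite add0n IH; case: k HB => [|k] HB /=.
    by rewrite !subn0 !bin0 add0n.
  by rewrite !mul0n.
under eq_bigr => b _ do rewrite sum_bm_cons.
case: k HB => [|k] HB.
  under eq_bigr => b _ do rewrite add0n.
  rewrite !IH (@binom_step (size w) 0 m) //.
cbn [mask].
rewrite big_split (IH (fun s => F (x :: s)) m k) IH IH.
rewrite subSS subSS ltnS mulnDr -addnA; congr addn.
exact: binom_step.
Qed.

Set Implicit Arguments. Unset Strict Implicit.
Arguments oi_sym {a b}. Arguments oi_trans {a b c}. Arguments oi_mask {a b} c. Arguments perm_std {z u}. Arguments std_oi {u}. Arguments std_perm {u}.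

Lemma count_sum T (a : pred T) s : count a s = \sum_(x <- s) (a x : nat).
Proof. by elim: s => [|x s IH] /=; rewrite ?big_nil ?big_cons ?IH. Qed.

Lemma pcount_big s w : size w < size s -> pcount s w = 0.
Proof. by move=> H; rewrite pcount_mask bm_nil. Qed.

Lemma oi_refl u : oi u u.
Proof. by []. Qed.

Lemma pcount_same x y : is_perm x -> is_perm y -> size x = size y ->
  pcount x y = (x == y).
Proof.
move=> Hx Hy Hs; rewrite pcount_mask -Hs bm_full /= mask_true ?Hs // addn0.
congr nat_of_bool; apply/order_isoP/eqP => [H|->]; last exact: oi_refl.
by rewrite (perm_std Hx (oi_sym H)) -(perm_std Hy (oi_refl y)).
Qed.

Lemma perm_uniq_is u : is_perm u -> uniq u.
Proof. by rewrite /is_perm => /perm_uniq ->; apply: iota_uniq. Qed.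

Lemma oi_std_iff z u : is_perm z -> uniq u -> order_iso u z = (z == std u).
Proof.
move=> Hz Hu; apply/order_isoP/eqP => [H|->].
  exact: perm_std Hz (oi_sym H).
exact: oi_sym (std_oi Hu).
Qed.

Lemma pcount_oi s u v : oi u v -> pcount s u = pcount s v.
Proof.
move=> H; rewrite !pcount_mask H.1; apply: eq_count => c.
apply/order_isoP/order_isoP => H'.
  exact: oi_trans (oi_sym (oi_mask c H)) H'.
exact: oi_trans (oi_mask c H) H'.
Qed.

Lemma mem_perms_iota z m : (z \in permutations (iota 1 m)) = is_perm z && (size z == m).
Proof.
rewrite mem_permutations /is_perm; apply/idP/andP => [H|[H /eqP Hs]].
  by have Hs := perm_size H; rewrite size_iota in Hs; rewrite Hs.
by rewrite -Hs.
Qed.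

Lemma key_sum s p m : is_perm s -> is_perm p ->
  \sum_(z <- permutations (iota 1 m)) pcount s z * pcount z p
  = (size s <= m) * 'C(size p - size s, m - size s) * pcount s p.
Proof.
move=> Hs Hp.
have Hup := perm_uniq_is Hp.
rewrite (eq_big_seq (fun z => \sum_(b <- bm (size p) m)
             ((order_iso (mask b p) z : nat) * pcount s z))); last first.
  move=> z; rewrite mem_perms_iota => /andP [Hz /eqP Hsz].
  rewrite [pcount z p]pcount_mask Hsz count_sum big_distrr /=.
  by apply: eq_bigr => b _; rewrite mulnC.
rewrite exchange_big /=.
rewrite (eq_big_seq (fun b => \sum_(c <- bm m (size s))
            (order_iso (mask c (mask b p)) s : nat))); last first.
  move=> b; rewrite mem_bm => /andP [/eqP Hb /eqP Hc].
  have Hu : uniq (mask b p) by apply: mask_uniq.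
  have Hstd : std (mask b p) \in permutations (iota 1 m).
    rewrite mem_perms_iota; apply/andP; split; first by rewrite /is_perm size_map; apply: std_perm.
    rewrite size_map size_mask; last by rewrite Hb. by rewrite Hc.
  rewrite (bigD1_seq (std (mask b p))) //=; last exact: permutations_uniq.
  rewrite big1_seq; last first.
    move=> z /andP [Hne Hz]; move: Hz; rewrite mem_perms_iota => /andP [Hz _].
    by rewrite oi_std_iff // (negPf Hne).
  rewrite oi_std_iff ?eqxx ?mul1n ?addn0 //; last by rewrite /is_perm size_map; apply: std_perm.
  rewrite (pcount_oi s (std_oi Hu)) pcount_mask count_sum.
  rewrite size_mask; last by rewrite Hb. by rewrite Hc.
rewrite (comp_id p (fun t => (order_iso t s : nat))).
by rewrite pcount_mask count_sum.
Qed.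

Set Implicit Arguments. Unset Strict Implicit.

Lemma Hinc_E x y : Hinc x y = if size y == (size x).+1 then ((pcount x y)%:R)%R else 0%R.
Proof.
rewrite /Hinc /Defs.eta /ple; case: (size y == (size x).+1); rewrite ?andbT ?andbF //.
by case: (ltnP 0 (pcount x y)) => // H; have -> : pcount x y = 0 by lia.
Qed.

Lemma ple0 x y : ~~ ple x y -> pcount x y = 0.
Proof. by rewrite /ple -leqNgt leqn0 => /eqP. Qed.

Lemma powform l : forall x y, is_perm x -> is_perm y ->
  incpow Hinc l x y =
  if size y == size x + l then (((l`! * pcount x y)%N)%:R)%R else 0%R.
Proof.
elim: l => [|l IH] x y Hx Hy.
  rewrite /= /idelta addn0 mul1n; case: (boolP (size y == size x)) => Hs.
    rewrite pcount_same //; first by case: (x == y).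
    by apply/esym/eqP.
  have -> : (x == y) = false by apply/negbTE; apply: contraNneq Hs => ->.
  by [].
rewrite /= /conv.
have E : forall m : nat,
  (\sum_(z <- permutations (iota 1 m) | ple x z && ple z y)
     incpow Hinc l x z * Hinc z y)%R
  = if (size y == m.+1) && (m == size x + l) then
      (((l`! * \sum_(z <- permutations (iota 1 m)) pcount x z * pcount z y)%N)%:R)%R
    else 0%R.
  move=> m; rewrite big_mkcond /=.
  rewrite (eq_big_seq (fun z => if (size y == m.+1) && (m == size x + l) then
      (((l`! * (pcount x z * pcount z y))%N)%:R)%R else 0%R)); last first.
    move=> z; rewrite mem_perms_iota => /andP [Hz /eqP Hsz].
    rewrite IH // Hinc_E Hsz.
    case: (boolP (ple x z && ple z y)) => Hp.
      by case: (m == size x + l); case: (size y == m.+1) => /=; rewrite ?mulr0 ?mul0r ?mulnA ?natrM.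
    have -> : pcount x z * pcount z y = 0.
      by move: Hp; rewrite negb_and => /orP [/ple0 ->|/ple0 ->]; rewrite ?muln0 ?mul0n.
    by rewrite muln0 if_same.
  case: (_ && _); last by rewrite big1.
  by rewrite -natr_sum big_distrr.
under eq_bigr => m _ do rewrite E.
case: (boolP (size y == size x + l.+1)) => Hs.
  have Hlt : size x + l < (size y).+1 by move/eqP: Hs; lia.
  rewrite (bigD1 (Ordinal Hlt)) //= [X in (_ + X)%R]big1; last first.
    move=> m Hm; case: (boolP ((size y == m.+1) && ((m : nat) == size x + l))) => // /andP [_ /eqP Hm'].
    by move/eqP: Hm; case; apply: val_inj.
  move/eqP: Hs => Hs.
  rewrite Hs addnS eqxx eqxx /= addr0 key_sum // leq_addr.
  set t := 'C(_, _); have -> : t = l.+1.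
    by rewrite /t /= !addKn Hs addKn binSn.
  by rewrite factS mul1n mulnA [l`! * _]mulnC.
rewrite big1 // => m _; case: (boolP ((size y == m.+1) && ((m : nat) == size x + l))) => // /andP [/eqP H1 /eqP H2].
have : size y = size x + l.+1 by rewrite H1 H2 addnS.
by move/eqP: Hs.
Qed.


Unset Implicit Arguments. Set Strict Implicit.

Theorem mainTheorem4 (sigma pi : seq nat) :
  is_perm sigma -> is_perm pi -> ple sigma pi ->
  forall N : nat, (size pi <= N)%N ->
  Pinc sigma pi = (\sum_(l < N.+1) incpow Hinc l sigma pi / (l`!)%:R)%R.
Proof.
move=> Hs Hp Hple N HN.
have Hk : size sigma <= size pi.
  rewrite leqNgt; apply/negP => H; move: Hple; by rewrite /ple pcount_big.
have HL : size pi - size sigma < N.+1 by lia.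
rewrite (bigD1 (Ordinal HL)) //= [X in (_ + X)%R]big1.
  rewrite addr0 powform // subnKC // eqxx natrM mulrAC divff ?mul1r //.
  by rewrite pnatr_eq0 -lt0n fact_gt0.
move=> i Hi; rewrite powform //; case: eqP => [E|_]; last by rewrite mul0r.
move/eqP: Hi; case; apply: val_inj => /=; lia.
Qed.
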